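(* Let $V$ be a finite set of variables, let $D_{\mathit{ds}}$ be the causal ABA framework defined in the context, let $S$ be a complete extension of $D_{\mathit{ds}}$ and let $G(S)=(V,\{(u,v)\mid\mathit{arr}_{uv}\in S\})$. For all distinct $x,y\in V$ and all $\mathbf Z\subseteq V\setminus\{x,y\}$: if $(x\perp\!\!\!\perp y\mid\mathbf Z)\in S$ then $x$ and $y$ are d-separated given $\mathbf Z$ in $G(S)$.
   Context: ABA. An ABA framework is $D=(\mathcal L,\mathcal R,\mathcal A,\overline{\cdot})$ with sentences $\mathcal L$, rules $a_0\leftarrow a_1,\dots,a_n$ ($n\ge0$), assumptions $\mathcal A\subseteq\mathcal L$ and contrary function $\overline{\cdot}:\mathcal A\to\mathcal L$. $S\vdash q$ ($S\subseteq\mathcal A$) if there is a finite rooted labelled tree with root $q$, set of leaf labels $S$ or $S\cup\{\top\}$, and every inner node labelled by the head of a rule whose children are labelled by the distinct body elements (one child $\top$ for an empty body). $S$ attacks $T$ if some $S'\subseteq S$ derives $\overline a$ for some $a\in T$. Conflict-free: does not attack itself; $S$ defends $T$ if it attacks every attacker of $T$; admissible: conflict-free and self-defending; complete: admissible and contains every assumption set it defends. Graphs. A path is a sequence of distinct nodes with consecutive nodes adjacent; an inner node $x_i$ of $x_1\dots x_n$ is a collider if $(x_{i-1},x_i)$ and $(x_{i+1},x_i)$ are edges; descendants are nodes reachable by directed paths. For $\mathbf Z\subseteq V\setminus\{x,y\}$, an $x$-$y$-path is $\mathbf Z$-active if every collider on it is in $\mathbf Z$ or has a descendant in $\mathbf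 Z$ and every other node on it is not in $\mathbf Z$; $x,y$ are d-separated given $\mathbf Z$ if no $\mathbf Z$-active $x$-$y$-path exists. An $x$-$y$-collider-tree of a DAG $H$ is a subgraph $t$ of $H$ with an $x$-$y$-path $p_t$ in $t$ such that every node of $t$ not on $p_t$ is a descendant of a collider of $p_t$; it is $\mathbf Z$-active if $p_t$ is $\mathbf Z$-active in $(V,\text{edges of }t)$. The framework $D_{\mathit{ds}}$. Assumptions: $\mathit{arr}_{xy}$ for all ordered pairs of distinct $x,y\in V$; one $\mathit{noe}_{xy}=\mathit{noe}_{yx}$ per unordered pair; independence assumptions $(x\perp\!\!\!\perp y\mid\mathbf Z)$ for $\mathbf Z\subseteq V$, distinct $x,y\in V\setminus\mathbf Z$ (symmetric in $x,y$). Each assumption $a$ has its own distinct fresh contrary $\overline a$. Rules: (i) $\overline a\leftarrow b$ for distinct $a,b\in\{\mathit{arr}_{xy},\mathit{arr}_{yx},\mathit{noe}_{xy}\}$; (ii) for every sequence $x_1\dots x_k$ with consecutive elements distinct and $x_1=x_k$ and every $1\le i<k$: $\overline{\mathit{arr}_{x_ix_{i+1}}}\leftarrow\mathit{arr}_{x_1x_2},\dots,\mathit{arr}_{x_{k-1}x_k}$; (iii) $\mathit{dpath}_{xy}\leftarrow\mathit{arr}_{xy}$; $\mathit{dpath}_{xz}\leftarrow\mathit{dpath}_{xy},\mathit{arr}_{yz}$; $e_{xy}\leftarrow\mathit{arr}_{xy}$; $e_{xy}\leftarrow\mathit{arr}_{yx}$; $\overline{\mathit{noe}_{xy}}\leftarrow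 e_{xy}$; (iv) for all distinct $x,y$, $\mathbf Z\subseteq V\setminus\{x,y\}$ and every $\mathbf Z$-active $x$-$y$-collider-tree $t$ (of any DAG on $V$), $\overline{(x\perp\!\!\!\perp y\mid\mathbf Z)}\leftarrow\{\mathit{arr}_{uv}\mid(u,v)\text{ an edge of }t\}$. *)

(* Defs.v *)
From Stdlib Require Import Relations List.
From mathcomp Require Import all_boot.
Set Implicit Arguments.
Unset Strict Implicit.
Unset Printing Implicit Defensive.

(* A rule  head <- body  has a (finite) set of body sentences, given as a
   predicate; assumptions are a predicate on sentences; the contrary is a
   function (only its values on assumptions matter). *)
Record ABA := MkABA {
  sent : Type;
  rule : sent -> (sent -> Prop) -> Prop;
  is_asm : sent -> Prop;
  contrary : sent -> sent
}.

(* Finite rooted labelled trees; label [None] stands for the symbol T (top). *)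
Inductive dtree (L : Type) := DNode (lab : option L) (ch : list (dtree L)).
Arguments DNode {L}.

Definition dlabel L (t : dtree L) : option L := let: DNode l _ := t in l.

Fixpoint leaves L (t : dtree L) : list (option L) :=
  match t with
  | DNode l ch =>
      if ch is [::] then [:: l]
      else (fix lv (c : list (dtree L)) :=
              match c with [::] => [::] | t' :: c' => leaves t' ++ lv c' end) ch
  end.

Fixpoint wf_tree (D : ABA) (t : dtree (sent D)) : Prop :=
  match t with
  | DNode l ch =>
      (ch = [::] /\ (l = None \/ exists a, l = Some a /\ @is_asm D a))
      \/ ((exists q body, l = Some q /\ @rule D q body /\
            (((forall s, ~ body s) /\ map (@dlabel _) ch = [:: None])
             \/ ((exists s, body s) /\ List.NoDup (map (@dlabel _) ch) /\
                 (forall o, List.In o (map (@dlabel _) ch) <->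
                            exists s, o = Some s /\ body s))))
          /\ (fix wfl (c : list (dtree (sent D))) : Prop :=
                match c with [::] => True | t' :: c' => wf_tree t' /\ wfl c' end) ch)
  end.

Definition asm_set (D : ABA) (S : sent D -> Prop) := forall a, S a -> @is_asm D a.
Definition subset_of (D : ABA) (S T : sent D -> Prop) := forall a, S a -> T a.

(* S |- q : a derivation tree with root q whose set of leaf labels is S or S u {T}. *)
Definition derives (D : ABA) (S : sent D -> Prop) (q : sent D) : Prop :=
  asm_set S /\
  exists t, wf_tree t /\ dlabel t = Some q /\
            (forall a, S a <-> List.In (Some a) (leaves t)).

Definition attacks (D : ABA) (S T : sent D -> Prop) : Prop :=
  exists S', subset_of S' S /\ exists a, T a /\ derives S' (@contrary D a).

Definition conflict_free (D : ABA) (S : sent D -> Prop) := ~ attacks S S.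

Definition defends (D : ABA) (S T : sent D -> Prop) :=
  forall U, asm_set U -> attacks U T -> attacks S U.

Definition admissible (D : ABA) (S : sent D -> Prop) :=
  asm_set S /\ conflict_free S /\ defends S S.

Definition complete (D : ABA) (S : sent D -> Prop) :=
  admissible S /\ forall T, asm_set T -> defends S T -> subset_of T S.

Section Graphs.
Variable V : finType.
Implicit Types (E : V -> V -> Prop) (p : seq V) (x y : V) (Z : {set V}).

Definition adj E u v := E u v \/ E v u.

Definition desc E u w := clos_refl_trans V E u w.

Definition is_xy_path E x y p :=
  p <> [::] /\ head x p = x /\ last x p = y /\ uniq p /\
  forall i, i.+1 < size p -> adj E (nth x p i) (nth x p i.+1).

Definition is_collider E x p i :=
  0 < i /\ i.+1 < size p /\
  E (nth x p i.-1) (nth x p i) /\ E (nth x p i.+1) (nth x p i).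

Definition Z_active E x Z p :=
  forall i, i < size p ->
    (is_collider E x p i ->
       (nth x p i \in Z \/ exists w, desc E (nth x p i) w /\ w \in Z)) /\
    (~ is_collider E x p i -> nth x p i \notin Z).

Definition d_separated E x y Z :=
  ~ exists p, is_xy_path E x y p /\ Z_active E x Z p.

Definition acyclic E := forall u v, E u v -> ~ desc E v u.

Definition collider_tree (H : V -> V -> Prop) (Nt : V -> Prop) (Et : V -> V -> Prop)
    x y p :=
  (forall u v, Et u v -> H u v /\ Nt u /\ Nt v) /\
  is_xy_path Et x y p /\
  (forall i, i < size p -> Nt (nth x p i)) /\
  (forall w, Nt w -> w \notin p ->
     exists i, is_collider Et x p i /\ desc Et (nth x p i) w).

End Graphs.

Section Dds.
Variable V : finType.

(* noe and independence assumptions are indexed by the unordered pair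
   {x,y} (as a set), which makes them symmetric by construction *)
Inductive asm_ds :=
  | Arr (x y : V)
  | Noe (pr : {set V})
  | Ind (pr : {set V}) (Z : {set V}).

Inductive sent_ds :=
  | SA (a : asm_ds)
  | SC (a : asm_ds)
  | Dpath (x y : V)
  | Ed (x y : V).

Definition noe (x y : V) := Noe [set x; y].
Definition indep (x y : V) (Z : {set V}) := Ind [set x; y] Z.

Definition is_asm_ds (s : sent_ds) : Prop :=
  match s with
  | SA (Arr x y) => x != y
  | SA (Noe pr) => #|pr| = 2
  | SA (Ind pr Z) => #|pr| = 2 /\ [disjoint pr & Z]
  | _ => False
  end.

Definition contrary_ds (s : sent_ds) : sent_ds :=
  match s with SA a => SC a | _ => s end.

Definition triple (x y : V) (a : asm_ds) :=
  a = Arr x y \/ a = Arr y x \/ a = noe x y.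

Inductive rule_ds : sent_ds -> (sent_ds -> Prop) -> Prop :=
  | R_excl x y a b : x != y -> triple x y a -> triple x y b -> a <> b ->
      rule_ds (SC a) (fun s => s = SA b)
  | R_cycle (x0 : V) (s : seq V) u v :
      path (fun a b => a != b) x0 s -> last x0 s = x0 ->
      (u, v) \in zip (x0 :: s) s ->
      rule_ds (SC (Arr u v))
        (fun l => exists u' v', (u', v') \in zip (x0 :: s) s /\ l = SA (Arr u' v'))
  | R_dpath1 x y : rule_ds (Dpath x y) (fun l => l = SA (Arr x y))
  | R_dpath2 x y z :
      rule_ds (Dpath x z) (fun l => l = Dpath x y \/ l = SA (Arr y z))
  | R_e1 x y : rule_ds (Ed x y) (fun l => l = SA (Arr x y))
  | R_e2 x y : rule_ds (Ed x y) (fun l => l = SA (Arr y x))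
  | R_noe x y : rule_ds (SC (noe x y)) (fun l => l = Ed x y)
  | R_dsep x y (Z : {set V}) (H : V -> V -> Prop) (Nt : V -> Prop)
      (Et : V -> V -> Prop) (p : seq V) :
      x != y -> x \notin Z -> y \notin Z ->
      acyclic H -> collider_tree H Nt Et x y p -> Z_active Et x Z p ->
      rule_ds (SC (indep x y Z))
        (fun l => exists u v, Et u v /\ l = SA (Arr u v)).

Definition D_ds : ABA := MkABA rule_ds is_asm_ds contrary_ds.

Definition G_of (S : sent_ds -> Prop) (u v : V) : Prop := S (SA (Arr u v)).

End Dds.

(* Main.v *)
From Stdlib Require Import Relations List Classical.
Require Import Defs.
From mathcomp Require Import all_boot.

Lemma nodup_ex {A} (l : list A) :
  exists l', List.NoDup l' /\ forall a, List.In a l' <-> List.In a l.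
Proof.
elim: l => [|a l [l' [Hn Hi]]]; first by exists [::]; split; [constructor|].
case: (classic (List.In a l')) => Ha.
- exists l'; split => // b; rewrite Hi /=; split; [by right|].
  case=> [<-|//]; by apply/Hi.
- exists (a :: l'); split; first by constructor.
  move=> b /=; by rewrite Hi.
Qed.

Lemma filter_ex {A} (P : A -> Prop) (l : list A) :
  exists l', forall a, List.In a l' <-> List.In a l /\ P a.
Proof.
elim: l => [|a l [l' Hi]]; first by exists [::] => b /=; split => [[]|[[]]].
case: (classic (P a)) => Ha.
- exists (a :: l') => b /=; rewrite Hi; intuition (subst; auto).
- exists l' => b /=; rewrite Hi; intuition (subst; auto); contradiction.
Qed.

Lemma In_mem (T : eqType) (x : T) (s : seq T) : List.In x s <-> x \in s.
Proof.
elim: s => //= a s IH; rewrite in_cons; split.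
- by case=> [->|/IH H]; rewrite ?eqxx //= H orbT.
- by case/orP=> [/eqP ->|/IH]; auto.
Qed.

Lemma in_map_iff' {A B} (f : A -> B) (l : seq A) y :
  List.In y (map f l) <-> exists x, f x = y /\ List.In x l.
Proof.
elim: l => [|a l IH] /=; first by split => [[]|[x [_ []]]].
rewrite IH; split.
- by case=> [<-|[x [<- H]]]; [exists a; auto | exists x; auto].
- by case=> x [<- [->|H]]; [left | right; exists x].
Qed.

Lemma NoDup_map_Some {A} (l : list A) : List.NoDup l -> List.NoDup (map Some l).
Proof.
elim: l => [|a l IH] H /=; first by constructor.
inversion H; subst; constructor; last by auto.
by move/in_map_iff'=> [b [[->]]].
Qed.

Section Main.
Variable V : finType.

Lemma derive_rule q body (l : list (sent_ds V)) :
  rule_ds q body -> (forall s, body s <-> List.In s l) -> l <> [::] ->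
  (forall s, List.In s l -> is_asm_ds s) ->
  derives (D:=D_ds V) (fun a => List.In a l) q.
Proof.
move=> Hr Hb Hne Ha; split; first by move=> a /Ha.
have [l' [Hnd Hi]] := nodup_ex l.
case El': l' => [|a0 l0].
  rewrite El' in Hi; case: (l) Hne Hi => // b l1 _ Hi.
  by case: (proj2 (Hi b)); left.
exists (DNode (Some q) (map (fun s => DNode (Some s) [::]) l')).
have Hleaves : leaves (DNode (Some q) (map (fun s => DNode (Some s) [::]) l')) = map Some l'.
  rewrite El' /=; congr cons; elim: l0 {El'} => //= b l0 IH; by rewrite IH.
have Hlab : map (@dlabel _) (map (fun s => DNode (Some s) [::]) l0) = map Some l0.
  by elim: (l0) => //= b l1 ->.
split; last split => //.
- rewrite El' /=; right; split.
  + exists q, body; split => //; split => //; right; split.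
    * exists a0; apply/Hb/Hi; rewrite El'; by left.
    * rewrite Hlab; split.
        have := @NoDup_map_Some _ _ Hnd; by rewrite El'.
      move=> o; change (List.In o (map Some (a0 :: l0)) <-> exists s, o = Some s /\ body s).
      rewrite in_map_iff'; split.
      - by case=> s [<- Hs]; exists s; split => //; apply/Hb/Hi; rewrite El'.
      - case=> s [-> /Hb /Hi Hs]; exists s; split => //; by rewrite -El'.
  + have : forall s, List.In s (a0 :: l0) -> is_asm_ds s.
      by move=> s Hs; apply Ha; apply/Hi; rewrite El'.
    move=> H; split.
      left; split => //; right; exists a0; split => //; by apply H; left.
    have : forall s, List.In s l0 -> is_asm_ds s by move=> s Hs; apply H; right.
    clear H.
    elim: (l0) => //= b l1 IH H; split; last by apply: IH => s Hs; apply H; auto.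
    left; split => //; right; exists b; split => //; apply H; auto.
- move=> a; rewrite Hleaves in_map_iff' -Hi; split.
  + by move=> H; exists a.
  + by case=> b [[->]].
Qed.

Lemma desc_seq (G : V -> V -> Prop) v u : desc G v u ->
  exists s, last v s = u /\ forall a b, (a, b) \in zip (v :: s) s -> G a b.
Proof.
rewrite /desc => /clos_rt_rt1n_iff; elim=> [w|a b c Hab _ [s [Hl Hs]]].
  by exists [::].
exists (b :: s); split => // a' b'; rewrite /= in_cons => /orP [/eqP [-> ->] //|].
exact: Hs.
Qed.

Lemma zip_path (P : rel V) x s :
  (forall a b, (a, b) \in zip (x :: s) s -> P a b) -> path P x s.
Proof.
elim: s x => //= b s IH x H; apply/andP; split.
  by apply: H; rewrite in_cons eqxx.
by apply: IH => a c Hm; apply: H; rewrite in_cons Hm orbT.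
Qed.

Lemma G_acyclic (S : sent (D_ds V) -> Prop) :
  asm_set S -> conflict_free S -> acyclic (G_of S).
Proof.
move=> Has Hcf u v Huv /desc_seq [s [Hl Hs]].
set zs := zip (u :: v :: s) (v :: s).
have Hz : forall a b, (a, b) \in zs -> G_of S a b.
  move=> a b; rewrite /zs /= in_cons => /orP [/eqP [-> ->] //|]; exact: Hs.
set l := map (fun pr => SA (Arr pr.1 pr.2)) zs.
apply: Hcf; exists (fun a => List.In a l); split.
  by move=> a /in_map_iff' [[a1 b1] [<- /In_mem /Hz]].
exists (SA (Arr u v)); split => //.
apply: derive_rule.
- apply: (@R_cycle V u (v :: s) u v).
  + apply: zip_path => a b /Hz H; exact: (Has _ H).
  + by [].
  + by rewrite /= in_cons eqxx.
- move=> s0; split.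
  + case=> [u' [v' [Hm ->]]]; apply/in_map_iff'; exists (u', v'); split => //; exact/In_mem.
  + by case/in_map_iff'=> [[a b] [<- /In_mem Hm]]; exists a, b.
- by [].
- by move=> s0 /in_map_iff' [[a b] [<- /In_mem /Hz H]]; exact: (Has _ H).
Qed.

End Main.

Theorem proposition3 (V : finType) (S : sent (D_ds V) -> Prop) :
  complete S ->
  forall (x y : V) (Z : {set V}),
    x != y -> x \notin Z -> y \notin Z ->
    S (SA (indep x y Z)) ->
    d_separated (G_of S) x y Z.
Proof.
move=> [[Has [Hcf _]] _] x y Z Hxy HxZ HyZ HS [p [Hpath Hact]].
set G := G_of S.
have Hacy : acyclic G by apply: G_acyclic.
set coll := fun i => is_collider G x p i.
set pe := fun u v => G u v /\ exists i, i.+1 < size p /\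
   ((u = nth x p i /\ v = nth x p i.+1) \/ (v = nth x p i /\ u = nth x p i.+1)).
set de := fun u v => G u v /\ exists i, i < size p /\ coll i /\ desc G (nth x p i) u /\
   exists w, w \in Z /\ desc G v w.
set Et := fun u v => pe u v \/ de u v.
set Nt := fun w => (exists i, i < size p /\ w = nth x p i) \/
   exists i, i < size p /\ coll i /\ desc Et (nth x p i) w.
have EtG : forall u v, Et u v -> G u v by move=> u v [[]|[]].
have collE : forall i, is_collider Et x p i <-> coll i.
  move=> i; split; first by case=> [H1 [H2 [H3 H4]]]; do !split => //; apply: EtG.
  case=> [H1 [H2 [H3 H4]]]; do !split => //; left; split => //.
    exists i.-1; rewrite prednK //; split; [exact: ltnW | by left].
  by exists i; split => //; right.
have lemA : forall c u, desc G c u -> forall i, i < size p -> coll i -> c = nth x p i ->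
    forall w, w \in Z -> desc G u w -> desc Et c u.
  move=> c u /clos_rt_rtn1_iff; elim=> [|u' u2 Hu' Hrt IH] i Hi Hc Ec w Hw Hd.
    exact: rt_refl.
  apply: rt_trans (IH i Hi Hc Ec w Hw _) _.
    apply: rt_trans Hd; exact: rt_step.
  apply: rt_step; right; split => //; exists i; do !split => //.
    by rewrite -Ec; apply/clos_rt_rtn1_iff.
  by exists w.
case: Hpath => [Hne [Hhd [Hlst [Huniq Hadj]]]].
have [l0 Hl0] := filter_ex (fun pr : V * V => Et pr.1 pr.2)
   [seq (a, b) | a <- enum V, b <- enum V].
set l := map (fun pr => SA (Arr pr.1 pr.2)) l0.
apply: Hcf; exists (fun a => List.In a l); split.
  move=> a /in_map_iff' [[u v] [<- /Hl0 [_ /EtG H]]]; exact H.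
exists (SA (indep x y Z)); split => //.
apply: derive_rule.
- apply: (@R_dsep V x y Z G Nt Et p) => //.
  split; last split; last split.
  + move=> u v Huv; split; first exact: EtG.
    case: Huv => [[Guv [i [Hi [[-> ->]|[-> ->]]]]]|[Guv [i [Hi [Hc [Hd [w [Hw Hvw]]]]]]]].
    * by split; left; [exists i; split => //; exact: ltnW| exists i.+1].
    * by split; left; [exists i.+1| exists i; split => //; exact: ltnW].
    * have Hu : desc Et (nth x p i) u.
        apply: (lemA _ _ Hd i Hi Hc erefl w Hw); apply: rt_trans Hvw; exact: rt_step.
      split; right; exists i; do !split => //.
      apply: rt_trans Hu _; apply: rt_step; right; split => //; exists i; do !split => //.
      by exists w.
  + split; first exact Hne. do 3 (split; first done). move=> i Hi; case: (Hadj i Hi) => H;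
      [left; left; split => //; exists i; split => //; left
      |right; left; split => //; exists i; split => //; right]; done.
  + by move=> i Hi; left; exists i.
  + move=> w [[i [Hi ->]]|[i [Hi [Hc Hd]]]] Hnot.
      by rewrite mem_nth in Hnot.
    by exists i; split => //; apply/collE.
- move=> i Hi; case: (Hact i Hi) => H1 H2; split.
    move=> Hc; have Hc' := proj1 (collE i) Hc.
    case: (H1 Hc') => [H|[w [Hd Hw]]]; [by left|right; exists w; split => //].
    exact: (lemA _ _ Hd i Hi Hc' erefl w Hw (rt_refl _ _ _)).
  by move=> H; apply: H2 => /collE.
- move=> s0; split.
  + case=> [u [v [Huv ->]]]; apply/in_map_iff'; exists (u, v); split => //.
    apply/Hl0; split => //; apply/In_mem; apply/allpairsP; exists (u, v).
    by rewrite !mem_enum.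
  + by case/in_map_iff'=> [[a b] [<- /Hl0 [_ H]]]; exists a, b.
- have Hsz : 1 < size p.
    move: Hne Hhd Hlst; case: (p) => // a [|b p'] //= _ Ha Hl.
    by move: Hxy; rewrite -Ha -Hl eqxx.
  set a := nth x p 0; set b := nth x p 1.
  have HE : Et a b \/ Et b a.
    case: (Hadj 0 Hsz) => /= H; [left|right]; left; split => //; exists 0;
      split => //; [left|right]; done.
  move=> El; case: HE => HE.
  + have : List.In (SA (Arr a b)) l.
      apply/in_map_iff'; exists (a, b); split => //; apply/Hl0; split => //.
      apply/In_mem; apply/allpairsP; exists (a, b); by rewrite !mem_enum.
    by rewrite El.
  + have : List.In (SA (Arr b a)) l.
      apply/in_map_iff'; exists (b, a); split => //; apply/Hl0; split => //.
      apply/In_mem; apply/allpairsP; exists (b, a); by rewrite !mem_enum.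
    by rewrite El.
- move=> s0 /in_map_iff' [[u v] [<- /Hl0 [_ /EtG H]]]; exact: (Has _ H).
Qed.
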